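(* Let $P(\lambda)=\sum_{j=0}^m A_j\lambda^j$ be an $n\times n$ complex matrix polynomial, $\mu_1\neq\mu_2$ complex numbers, $\varepsilon>0$ and $w=\{\omega_0,\dots,\omega_m\}$ nonnegative weights with $\omega_0>0$. Suppose $Q(\lambda)=P(\lambda)+\Delta(\lambda)\in\mathcal{B}(P,\varepsilon,w)$, where $\Delta(\lambda)=\sum_{j=0}^m\Delta_j\lambda^j$, and that $\mu_1,\mu_2$ are eigenvalues of $Q$. Then for every $\gamma\neq0$, $$\varepsilon\ \ge\ \frac{\|F[\Delta(\mu_1,\mu_2);\gamma]\|}{\left\|\begin{bmatrix} w(|\mu_1|) & 0\\ \gamma\,|w[\mu_1,\mu_2]| & w(|\mu_2|)\end{bmatrix}\right\|}\ \ge\ \frac{s_{2n-1}(F[P(\mu_1,\mu_2);\gamma])}{\left\|\begin{bmatrix} w(|\mu_1|) & 0\\ \gamma\,|w[\mu_1,\mu_2]| & w(|\mu_2|)\end{bmatrix}\right\|}.$$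
   Context: $\mathcal{B}(P,\varepsilon,w)$ is the set of matrix polynomials $\sum_{j=0}^m(A_j+\Delta_j)\lambda^j$ with $\Delta_j\in\mathbb{C}^{n\times n}$ and $\|\Delta_j\|\le\varepsilon\omega_j$ for $j=0,\dots,m$ ($\|\cdot\|$ the spectral norm). $w(\lambda)=\sum_{j=0}^m\omega_j\lambda^j$, and $|w[\mu_1,\mu_2]|$ denotes $\sum_{j=0}^m\omega_j\frac{|\mu_1^j-\mu_2^j|}{|\mu_1-\mu_2|}$. For a matrix polynomial $R$, $R[\mu_1,\mu_2]=\frac{R(\mu_1)-R(\mu_2)}{\mu_1-\mu_2}$ and $F[R(\mu_1,\mu_2);\gamma]=\begin{bmatrix} R(\mu_1) & 0\\ \gamma R[\mu_1,\mu_2] & R(\mu_2)\end{bmatrix}$. Singular values are ordered $s_1\ge\dots\ge s_{2n}$, so $s_{2n-1}$ is the second smallest. *)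

(* Defs.v *)
From HB Require Import structures.
From mathcomp Require Import all_boot all_order all_algebra.
From mathcomp Require Import complex.
From mathcomp Require Import boolp classical_sets reals.
From Stdlib Require Import ClassicalEpsilon.
Set Implicit Arguments. Unset Strict Implicit. Unset Printing Implicit Defensive.
Import Order.TTheory GRing.Theory Num.Theory.
Local Open Scope ring_scope.
Local Open Scope complex_scope.

Section Defs.
Variable R : realType.
Local Notation C := R[i].

Definition cabs (z : C) : R := Normc.normc z.

Definition vnorm (k : nat) (v : 'cV[C]_k) : R :=
  Num.sqrt (\sum_(i < k) cabs (v i 0) ^+ 2).

Definition specnorm (p q : nat) (A : 'M[C]_(p, q)) : R :=
  sup [set vnorm (A *m v) | v in [set v : 'cV[C]_q | vnorm v = 1]]%classic.

Definition ctrmx (p q : nat) (A : 'M[C]_(p, q)) : 'M[C]_(q, p) :=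
  (map_mx (@conjc R) A)^T.

Definition unitary (k : nat) (U : 'M[C]_k) : Prop := ctrmx U *m U = 1%:M.

Definition svd_values (N : nat) (A : 'M[C]_N) (s : 'I_N -> R) : Prop :=
  (forall i, 0 <= s i) /\ (forall i j : 'I_N, (i <= j)%N -> s j <= s i) /\
  exists U V : 'M[C]_N, unitary U /\ unitary V /\
    A = U *m diag_mx (\row_i (s i)%:C) *m ctrmx V.

Definition singular_values (N : nat) (A : 'M[C]_N) : 'I_N -> R :=
  epsilon (inhabits (fun _ => 0)) (svd_values A).

(* s_k(A), 1-based: s_1 >= s_2 >= ... >= s_N *)
Definition singval (N : nat) (A : 'M[C]_N) (k : nat) : R :=
  nth 0 [seq singular_values A i | i <- enum 'I_N] k.-1.

Definition mpeval (n m : nat) (A : 'I_m.+1 -> 'M[C]_n) (z : C) : 'M[C]_n :=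
  \sum_(j < m.+1) z ^+ j *: A j.

Definition mpdd (n m : nat) (A : 'I_m.+1 -> 'M[C]_n) (z1 z2 : C) : 'M[C]_n :=
  (z1 - z2)^-1 *: (mpeval A z1 - mpeval A z2).

Definition Fmx (n m : nat) (A : 'I_m.+1 -> 'M[C]_n) (z1 z2 : C) (g : R)
  : 'M[C]_(n + n) :=
  block_mx (mpeval A z1) 0 (g%:C *: mpdd A z1 z2) (mpeval A z2).

Definition mp_eigenvalue (n m : nat) (A : 'I_m.+1 -> 'M[C]_n) (z : C) : Prop :=
  \det (mpeval A z) = 0.

Definition weval (m : nat) (w : 'I_m.+1 -> R) (x : R) : R :=
  \sum_(j < m.+1) w j * x ^+ j.

Definition wdd_abs (m : nat) (w : 'I_m.+1 -> R) (z1 z2 : C) : R :=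
  \sum_(j < m.+1) w j * (cabs (z1 ^+ j - z2 ^+ j) / cabs (z1 - z2)).

Definition Wmx (m : nat) (w : 'I_m.+1 -> R) (z1 z2 : C) (g : R) : 'M[C]_2 :=
  \matrix_(i < 2, j < 2)
    (if (i == 0) && (j == 0) then (weval w (cabs z1))%:C
     else if (i == 1) && (j == 0) then (g * wdd_abs w z1 z2)%:C
     else if (i == 1) && (j == 1) then (weval w (cabs z2))%:C
     else 0).

End Defs.

(* Main.v *)
Require Import Defs.
From HB Require Import structures.
From mathcomp Require Import all_boot all_order all_algebra.
From mathcomp Require Import complex reals boolp classical_sets.
From Stdlib Require Import ClassicalEpsilon.
From mathcomp Require Import ring lra zify.
Set Implicit Arguments. Unset Strict Implicit. Unset Printing Implicit Defensive.
Import Order.TTheory GRing.Theory Num.Theory Num.Def.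
Local Open Scope ring_scope.
Local Open Scope complex_scope.
Local Open Scope sesquilinear_scope.

Section Basics.
Variable R : realType.
Local Notation C := R[i].

Definition sq k (v : 'cV[C]_k) : R := \sum_(i < k) cabs (v i 0) ^+ 2.

Lemma cabsE (z : C) : (cabs z)%:C = `|z|.
Proof. by []. Qed.

Lemma cabs_ge0 (z : C) : 0 <= cabs z.
Proof. by rewrite -lecR cabsE normr_ge0. Qed.

Lemma sq_ge0 k (v : 'cV[C]_k) : 0 <= sq v.
Proof. by apply: sumr_ge0 => i _; rewrite exprn_ge0 ?cabs_ge0. Qed.

Lemma vnormE k (v : 'cV[C]_k) : vnorm v = Num.sqrt (sq v).
Proof. by []. Qed.

Lemma vnorm_ge0 k (v : 'cV[C]_k) : 0 <= vnorm v.
Proof. exact: sqrtr_ge0. Qed.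

Lemma vnorm_sq k (v : 'cV[C]_k) : vnorm v ^+ 2 = sq v.
Proof. by rewrite vnormE sqr_sqrtr ?sq_ge0. Qed.

Lemma ctrmxE p q (A : 'M[C]_(p, q)) : ctrmx A = A ^t conjC.
Proof. by rewrite /ctrmx map_trmx. Qed.

Lemma sqC k (v : 'cV[C]_k) : (sq v)%:C = (ctrmx v *m v) 0 0.
Proof.
rewrite /sq rmorph_sum !mxE; apply: eq_bigr => i _.
rewrite rmorphXn /= cabsE normCK !mxE mulrC.
by [].
Qed.

Lemma cabsR (x : R) : cabs x%:C = `|x|.
Proof. by apply: complexI; rewrite cabsE normc_def /= expr0n /= addr0 sqrtr_sqr. Qed.


Lemma sqrt_realC (x : R) : 0 <= x -> (Num.sqrt x)%:C = sqrtC (x%:C).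
Proof.
move=> x0; rewrite -[in RHS](sqr_sqrtr x0) rmorphXn /= sqrCK //.
by rewrite ler0c sqrtr_ge0.
Qed.

Lemma sq_dot k (v : 'cV[C]_k) : (sq v)%:C = dotmx (v^T) (v^T).
Proof.
rewrite sqC dotmxE !mxE; apply: eq_bigr => i _; rewrite !mxE mulrC.
by [].
Qed.

Lemma vnormC k (v : 'cV[C]_k) : (vnorm v)%:C = sqrtC (dotmx (v^T) (v^T)).
Proof. by rewrite vnormE sqrt_realC ?sq_ge0 // sq_dot. Qed.

Lemma vnormD k (u v : 'cV[C]_k) : vnorm (u + v) <= vnorm u + vnorm v.
Proof.
rewrite -lecR rmorphD /= !vnormC linearD /=.
exact: (triangle_lerif (@dotmx C k) (u^T) (v^T)).1.
Qed.

Lemma cabsM (x y : C) : cabs (x * y) = cabs x * cabs y.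
Proof. by apply: complexI; rewrite rmorphM /= !cabsE normrM. Qed.

Lemma sqZ k (c : C) (v : 'cV[C]_k) : sq (c *: v) = cabs c ^+ 2 * sq v.
Proof.
rewrite /sq mulr_sumr; apply: eq_bigr => i _.
by rewrite !mxE cabsM exprMn.
Qed.

Lemma vnormZ k (c : C) (v : 'cV[C]_k) : vnorm (c *: v) = cabs c * vnorm v.
Proof.
rewrite !vnormE sqZ sqrtrM ?exprn_ge0 ?cabs_ge0 // sqrtr_sqr.
by rewrite ger0_norm ?cabs_ge0.
Qed.

Lemma vnormN k (v : 'cV[C]_k) : vnorm (- v) = vnorm v.
Proof.
rewrite !vnormE /sq; congr Num.sqrt; apply: eq_bigr => i _.
by rewrite mxE /cabs normcN.
Qed.

Lemma sq_col_mx k l (a : 'cV[C]_k) (b : 'cV[C]_l) :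
  sq (col_mx a b) = sq a + sq b.
Proof.
rewrite /sq big_split_ord /=; congr (_ + _); apply: eq_bigr => i _.
  by rewrite col_mxEu.
by rewrite col_mxEd.
Qed.

Lemma ctrmxM p q r (A : 'M[C]_(p, q)) (B : 'M[C]_(q, r)) :
  ctrmx (A *m B) = ctrmx B *m ctrmx A.
Proof. by rewrite /ctrmx map_mxM trmx_mul. Qed.

Lemma sq_unitary k l (U : 'M[C]_(k, l)) (v : 'cV[C]_l) :
  ctrmx U *m U = 1%:M -> sq (U *m v) = sq v.
Proof.
move=> HU; apply: complexI; rewrite !sqC ctrmxM.
by rewrite mulmxA -(mulmxA (ctrmx v)) HU mulmx1.
Qed.

Lemma vnorm_unitary k l (U : 'M[C]_(k, l)) (v : 'cV[C]_l) :
  ctrmx U *m U = 1%:M -> vnorm (U *m v) = vnorm v.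
Proof. by move=> HU; rewrite !vnormE sq_unitary. Qed.

Lemma sq_eq0 k (v : 'cV[C]_k) : sq v = 0 -> v = 0.
Proof.
move=> h; apply/matrixP => i j; rewrite ord1 mxE.
have : cabs (v i 0) ^+ 2 = 0.
  apply/eqP; rewrite eq_le exprn_ge0 ?cabs_ge0 // andbT -h /sq.
  rewrite (bigD1 i) //= lerDl sumr_ge0 // => ? _.
  by rewrite exprn_ge0 ?cabs_ge0.
move/eqP; rewrite expf_eq0 /= => /eqP h2.
by apply/eqP; rewrite -normr_eq0 -cabsE h2.
Qed.

Lemma vnorm_eq0 k (v : 'cV[C]_k) : vnorm v = 0 -> v = 0.
Proof. by move=> h; apply: sq_eq0; rewrite -vnorm_sq h expr0n. Qed.


Lemma vnorm0 k : vnorm (0 : 'cV[C]_k) = 0.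
Proof.
rewrite vnormE /sq big1 ?sqrtr0 // => i _; rewrite mxE.
suff -> : cabs (0 : C) = 0 by rewrite expr0n.
by apply: (@complexI R); rewrite cabsE normr0.
Qed.

Lemma vnorm_sum k (I : finType) (f : I -> 'cV[C]_k) :
  vnorm (\sum_i f i) <= \sum_i vnorm (f i).
Proof.
apply: (big_ind2 (fun x y => vnorm x <= y)).
- by rewrite vnorm0.
- by move=> x1 x2 y1 y2 h1 h2; apply: le_trans (vnormD _ _) _; exact: lerD.
- by [].
Qed.

Lemma cabs_le_vnorm k (v : 'cV[C]_k) i : cabs (v i 0) <= vnorm v.
Proof.
rewrite vnormE -(ger0_norm (cabs_ge0 (v i 0))) -sqrtr_sqr.
rewrite ler_sqrt ?sq_ge0 // /sq (bigD1 i) //= lerDl sumr_ge0 // => ? _.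
by rewrite exprn_ge0 ?cabs_ge0.
Qed.

Lemma mulmx_col_sum p q (M : 'M[C]_(p, q)) (v : 'cV[C]_q) :
  M *m v = \sum_j v j 0 *: col j M.
Proof.
apply/matrixP => i k; rewrite ord1 !mxE summxE; apply: eq_bigr => j _.
by rewrite !mxE mulrC.
Qed.

Lemma vnormM_bound p q (M : 'M[C]_(p, q)) :
  exists K, forall v, vnorm (M *m v) <= K * vnorm v.
Proof.
exists (\sum_j vnorm (col j M)) => v.
rewrite mulmx_col_sum mulr_suml; apply: le_trans (vnorm_sum _) _.
apply: ler_sum => j _; rewrite vnormZ mulrC.
by apply: ler_wpM2l; [exact: vnorm_ge0 | exact: cabs_le_vnorm].
Qed.

Definition unitset q := [set v : 'cV[C]_q | vnorm v = 1]%classic.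
Arguments unitset : clear implicits.

Lemma specnorm_hasub p q (M : 'M[C]_(p, q)) :
  has_ubound [set vnorm (M *m v) | v in unitset q]%classic.
Proof.
have [K HK] := vnormM_bound M; exists K => _ [v /= hv <-].
by have := HK v; rewrite hv mulr1.
Qed.

Lemma specnorm_ub p q (M : 'M[C]_(p, q)) v :
  vnorm v = 1 -> vnorm (M *m v) <= specnorm M.
Proof.
move=> hv; apply: sup_upper_bound; last by exists v.
split; last exact: specnorm_hasub.
by exists (vnorm (M *m v)); exists v.
Qed.

Lemma specnorm_ge0 p q (M : 'M[C]_(p, q)) : 0 <= specnorm M.
Proof.
have [[v hv]|nov] := pselect (exists v : 'cV[C]_q, vnorm v = 1).
  exact: le_trans (vnorm_ge0 _) (specnorm_ub M hv).
rewrite /specnorm -/(unitset q).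
suff -> : [set vnorm (M *m v) | v in unitset q]%classic = set0 by rewrite sup0.
apply/seteqP; split => // t [v hv _]; exfalso; apply: nov; by exists v.
Qed.

Lemma specnorm_le p q (M : 'M[C]_(p, q)) c :
  0 <= c -> (forall v, vnorm v = 1 -> vnorm (M *m v) <= c) -> specnorm M <= c.
Proof.
move=> c0 H.
have [[v hv]|nov] := pselect (exists v : 'cV[C]_q, vnorm v = 1).
  apply: ge_sup; first by exists (vnorm (M *m v)); exists v.
  by move=> _ [u hu <-]; exact: H.
rewrite /specnorm -/(unitset q).
suff -> : [set vnorm (M *m v) | v in unitset q]%classic = set0 by rewrite sup0.
apply/seteqP; split => // t [v hv _]; exfalso; apply: nov; by exists v.
Qed.

Lemma normalize k (v : 'cV[C]_k) : v != 0 ->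
  vnorm ((vnorm v)^-1%:C *: v) = 1.
Proof.
move=> v0; have hv : vnorm v != 0 by apply: contra v0 => /eqP/vnorm_eq0 ->.
rewrite vnormZ cabsR ger0_norm ?invr_ge0 ?vnorm_ge0 //.
by rewrite mulVf.
Qed.

Lemma specnormP p q (M : 'M[C]_(p, q)) v :
  vnorm (M *m v) <= specnorm M * vnorm v.
Proof.
have [->|v0] := eqVneq v 0.
  by rewrite mulmx0 !vnorm0 mulr0.
have hv : 0 < vnorm v.
  by rewrite lt_def vnorm_ge0 andbT; apply: contra v0 => /eqP/vnorm_eq0 ->.
have := specnorm_ub M (normalize v0).
rewrite -scalemxAr vnormZ cabsR ger0_norm ?invr_ge0 ?vnorm_ge0 //.
by rewrite ler_pdivrMl // mulrC.
Qed.


Lemma cabsX (z : C) j : cabs (z ^+ j) = cabs z ^+ j.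
Proof. by apply: (@complexI R); rewrite rmorphXn /= !cabsE normrX. Qed.

Lemma cabsV (z : C) : cabs (z^-1) = (cabs z)^-1.
Proof. by apply: (@complexI R); rewrite fmorphV /= !cabsE normfV. Qed.

Lemma sum_bound n m (c : 'I_m.+1 -> C) (D : 'I_m.+1 -> 'M[C]_n)
    (w : 'I_m.+1 -> R) (eps : R) (x : 'cV[C]_n) :
  (forall j, specnorm (D j) <= eps * w j) ->
  vnorm ((\sum_j c j *: D j) *m x) <= eps * (\sum_j w j * cabs (c j)) * vnorm x.
Proof.
move=> HD; rewrite mulmx_suml; apply: le_trans (vnorm_sum _) _.
rewrite mulr_sumr mulr_suml; apply: ler_sum => j _.
rewrite -scalemxAl vnormZ.
apply: le_trans (ler_wpM2l (cabs_ge0 _) (specnormP _ _)) _.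
apply: le_trans (ler_wpM2l (cabs_ge0 _) (ler_wpM2r (vnorm_ge0 x) (HD j))) _.
by rewrite le_eqVlt; apply/orP; left; apply/eqP; ring.
Qed.

Lemma mpeval_bound n m (D : 'I_m.+1 -> 'M[C]_n) (w : 'I_m.+1 -> R) (eps : R)
    (z : C) (x : 'cV[C]_n) :
  (forall j, specnorm (D j) <= eps * w j) ->
  vnorm (mpeval D z *m x) <= eps * weval w (cabs z) * vnorm x.
Proof.
move=> HD; apply: (le_trans (sum_bound (fun j => z ^+ j) x HD)).
rewrite le_eqVlt /weval; apply/orP; left; apply/eqP.
by congr (_ * _ * _); apply: eq_bigr => j _; rewrite cabsX.
Qed.

Lemma mpddE n m (D : 'I_m.+1 -> 'M[C]_n) (z1 z2 : C) :
  mpdd D z1 z2 = \sum_(j < m.+1) ((z1 ^+ j - z2 ^+ j) / (z1 - z2)) *: D j.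
Proof.
rewrite /mpdd /mpeval -sumrB scaler_sumr; apply: eq_bigr => j _ /=.
by rewrite -scalerBl scalerA mulrC.
Qed.

Lemma mpdd_bound n m (D : 'I_m.+1 -> 'M[C]_n) (w : 'I_m.+1 -> R) (eps : R)
    (z1 z2 : C) (x : 'cV[C]_n) :
  (forall j, specnorm (D j) <= eps * w j) ->
  vnorm (mpdd D z1 z2 *m x) <= eps * wdd_abs w z1 z2 * vnorm x.
Proof.
move=> HD; rewrite mpddE.
apply: (le_trans (sum_bound (fun j => (z1 ^+ j - z2 ^+ j) / (z1 - z2)) x HD)).
rewrite le_eqVlt /wdd_abs; apply/orP; left; apply/eqP.
by congr (_ * _ * _); apply: eq_bigr => j _; rewrite cabsM cabsV.
Qed.


Definition sgn (g : R) : R := if g < 0 then -1 else 1.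

Lemma sgn_sqr g : sgn g ^+ 2 = 1.
Proof. by rewrite /sgn; case: ifP => _; rewrite ?sqrrN expr1n. Qed.

Lemma sgn_norm g : g = sgn g * `|g|.
Proof.
rewrite /sgn; case: ltP => h.
  by rewrite ltr0_norm // mulN1r opprK.
by rewrite ger0_norm // mul1r.
Qed.

Definition yvec (a b : R) : 'cV[C]_2 :=
  \col_(i < 2) (if i == 0 then a%:C else b%:C).

Lemma sq_yvec a b : sq (yvec a b) = a ^+ 2 + b ^+ 2.
Proof.
rewrite /sq /yvec !big_ord_recl big_ord0 addr0 !mxE /=.
by rewrite expr0n /= !addr0 !sqr_sqrtr ?sqr_ge0.
Qed.

Lemma Wy m (w : 'I_m.+1 -> R) z1 z2 g a b :
  Wmx w z1 z2 g *m yvec a b =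
  yvec (weval w (cabs z1) * a) (g * wdd_abs w z1 z2 * a + weval w (cabs z2) * b).
Proof.
apply/matrixP => i k; rewrite ord1 !mxE !big_ord_recl big_ord0 !mxE.
case: i => [[|[|//]] Hi] /=.
  by rewrite !(mul0r, mulr0, addr0, add0r) -rmorphM.
by rewrite !(mul0r, mulr0, addr0, add0r) -!rmorphM -rmorphD.
Qed.


Lemma weval_ge0 m (w : 'I_m.+1 -> R) x : (forall j, 0 <= w j) -> 0 <= x -> 0 <= weval w x.
Proof. by move=> hw hx; apply: sumr_ge0 => j _; rewrite mulr_ge0 ?exprn_ge0. Qed.

Lemma wdd_ge0 m (w : 'I_m.+1 -> R) z1 z2 : (forall j, 0 <= w j) -> 0 <= wdd_abs w z1 z2.
Proof.
move=> hw; apply: sumr_ge0 => j _; rewrite mulr_ge0 ?divr_ge0 ?cabs_ge0 //.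
Qed.

Lemma FmxM n m (D : 'I_m.+1 -> 'M[C]_n) z1 z2 g (x : 'cV[C]_(n + n)) :
  Fmx D z1 z2 g *m x = col_mx (mpeval D z1 *m usubmx x)
    (g%:C *: (mpdd D z1 z2 *m usubmx x) + mpeval D z2 *m dsubmx x).
Proof.
rewrite -{1}[x](vsubmxK x) /Fmx mul_block_col mul0mx addr0.
by rewrite -scalemxAl.
Qed.

Lemma le_sq_of (u : R) v : 0 <= u -> u <= v -> u ^+ 2 <= v ^+ 2.
Proof. by move=> u0 uv; rewrite ler_pXn2r // ?nnegrE ?(le_trans u0 uv). Qed.

Lemma part1 n m (D : 'I_m.+1 -> 'M[C]_n) (w : 'I_m.+1 -> R) (eps : R) z1 z2 (g : R) :
  0 <= eps -> (forall j, 0 <= w j) -> (forall j, specnorm (D j) <= eps * w j) ->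
  specnorm (Fmx D z1 z2 g) <= eps * specnorm (Wmx w z1 z2 g).
Proof.
move=> e0 hw HD; apply: specnorm_le; first by rewrite mulr_ge0 ?specnorm_ge0.
move=> x hx; rewrite FmxM.
set x1 := usubmx x; set x2 := dsubmx x.
have hab : vnorm x1 ^+ 2 + vnorm x2 ^+ 2 = 1.
  rewrite !vnorm_sq -sq_col_mx /x1 /x2 vsubmxK -vnorm_sq hx expr1n //.
set a := vnorm x1; set b := vnorm x2.
set w1 := weval w (cabs z1); set w2 := weval w (cabs z2); set d := wdd_abs w z1 z2.
have a0 : 0 <= a by exact: vnorm_ge0.
have b0 : 0 <= b by exact: vnorm_ge0.
have w10 : 0 <= w1 by apply: weval_ge0 => //; exact: cabs_ge0.
have w20 : 0 <= w2 by apply: weval_ge0 => //; exact: cabs_ge0.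
have d0 : 0 <= d by exact: wdd_ge0.
have h1 : vnorm (mpeval D z1 *m x1) <= eps * w1 * a by exact: mpeval_bound.
have h3 : vnorm (mpeval D z2 *m x2) <= eps * w2 * b by exact: mpeval_bound.
have h2 : vnorm (g%:C *: (mpdd D z1 z2 *m x1) + mpeval D z2 *m x2)
     <= `|g| * (eps * d * a) + eps * w2 * b.
  apply: le_trans (vnormD _ _) _; apply: lerD => //.
  by rewrite vnormZ cabsR; apply: ler_wpM2l => //; exact: mpdd_bound.
have hy : vnorm (yvec a (sgn g * b)) = 1.
  by rewrite vnormE sq_yvec exprMn sgn_sqr mul1r hab sqrtr1.
have := specnorm_ub (Wmx w z1 z2 g) hy; rewrite Wy.
move=> /(ler_wpM2l e0); apply: le_trans.
rewrite vnormE sq_col_mx -vnorm_sq -(vnorm_sq (_ + _)).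
rewrite [X in _ <= eps * X]vnormE sq_yvec -(ger0_norm e0) -sqrtr_sqr -sqrtrM ?sqr_ge0 //.
rewrite ler_sqrt; last exact: mulr_ge0 (sqr_ge0 _) (addr_ge0 (sqr_ge0 _) (sqr_ge0 _)).
apply: le_trans (lerD (le_sq_of (vnorm_ge0 _) h1) (le_sq_of (vnorm_ge0 _) h2)) _.
have -> : g * d * a + w2 * (sgn g * b) = sgn g * (`|g| * d * a + w2 * b).
  by rewrite {1}(sgn_norm g); ring.
rewrite le_eqVlt; apply/orP; left; apply/eqP.
rewrite [(sgn g * _) ^+ 2]exprMn sgn_sqr mul1r /w1 /w2 /d.
ring.
Qed.


Lemma ctrmxK p q (A : 'M[C]_(p, q)) : ctrmx (ctrmx A) = A.
Proof. by apply/matrixP => i j; rewrite !mxE conjcK. Qed.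

Lemma unitaryC N (V : 'M[C]_N) : unitary V -> unitary (ctrmx V).
Proof. by rewrite /unitary ctrmxK => /mulmx1C. Qed.

Lemma svd_lower N (M : 'M[C]_N) (s : 'I_N -> R) U V (i0 i1 : 'I_N) (z : 'cV[C]_N) :
  (forall i, 0 <= s i) -> (forall i j : 'I_N, (i <= j)%N -> s j <= s i) ->
  unitary U -> unitary V -> M = U *m diag_mx (\row_i (s i)%:C) *m ctrmx V ->
  (ctrmx V *m z) i1 0 = 0 -> (forall i : 'I_N, i != i1 -> (i <= i0)%N) ->
  s i0 * vnorm z <= vnorm (M *m z).
Proof.
move=> s0 smono hU hV -> hz hi.
rewrite -!mulmxA vnorm_unitary //.
rewrite -[in X in _ * X <= _](vnorm_unitary z (unitaryC hV)).
set y := ctrmx V *m z in hz *; clearbody y.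
rewrite !vnormE -[s i0](ger0_norm (s0 i0)) -sqrtr_sqr -sqrtrM ?sqr_ge0 //.
rewrite ler_sqrt ?sq_ge0 // /sq mulr_sumr; apply: ler_sum => i _.
rewrite mul_diag_mx !mxE cabsM cabsR ger0_norm // exprMn.
have c0 : cabs (0 : C) = 0 by apply: (@complexI R); rewrite cabsE normr0.
have [->|ne] := eqVneq i i1; first by rewrite hz c0 expr0n /= !mulr0.
apply: ler_wpM2r; first exact: exprn_ge0 (cabs_ge0 _).
by apply: le_sq_of => //; apply: smono; apply: hi.
Qed.

Lemma FmxD n m (A D : 'I_m.+1 -> 'M[C]_n) z1 z2 g :
  Fmx (fun j => A j + D j) z1 z2 g = Fmx A z1 z2 g + Fmx D z1 z2 g.
Proof.
have hE z : mpeval (fun j => A j + D j) z = mpeval A z + mpeval D z.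
  by rewrite /mpeval -big_split; apply: eq_bigr => j _; rewrite scalerDr.
rewrite /Fmx add_block_mx addr0 /mpdd !hE; congr block_mx.
by rewrite -!scalerDr opprD addrACA.
Qed.

Lemma ker_col n (M : 'M[C]_n) : \det M = 0 -> exists2 v : 'cV[C]_n, v != 0 & M *m v = 0.
Proof.
move=> h; have /det0P [u u0 hu] : \det M^T == 0 by rewrite det_tr h.
exists u^T; first by rewrite trmx_eq0.
by rewrite -[M]trmxK -trmx_mul hu trmx0.
Qed.


Lemma part2_core n m (A D : 'I_m.+1 -> 'M[C]_n) z1 z2 (g : R)
    (s : 'I_(n + n) -> R) U V (i0 i1 : 'I_(n + n)) :
  z1 != z2 ->
  mp_eigenvalue (fun j => A j + D j) z1 -> mp_eigenvalue (fun j => A j + D j) z2 ->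
  (forall i, 0 <= s i) -> (forall i j : 'I_(n + n), (i <= j)%N -> s j <= s i) ->
  unitary U -> unitary V -> Fmx A z1 z2 g = U *m diag_mx (\row_i (s i)%:C) *m ctrmx V ->
  (forall i : 'I_(n + n), i != i1 -> (i <= i0)%N) ->
  s i0 <= specnorm (Fmx D z1 z2 g).
Proof.
move=> z12 e1 e2 s0 smono hU hV hsvd hi.
set Q := fun j => A j + D j.
pose phi (k : 'cV[C]_(n + n)) := (ctrmx V *m k) i1 0.
suff main : forall z, z != 0 -> Fmx Q z1 z2 g *m z = 0 -> phi z = 0 ->
    s i0 <= specnorm (Fmx D z1 z2 g).
  have [x x0 hx] := ker_col e1.
  have [v v0 hv] := ker_col e2.
  set k1 : 'cV[C]_(n + n) := col_mx 0 v.
  set k2 : 'cV[C]_(n + n) := col_mx x ((g%:C / (z1 - z2)) *: x).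
  have hk1 : Fmx Q z1 z2 g *m k1 = 0.
    by rewrite FmxM col_mxKu col_mxKd !mulmx0 scaler0 add0r hv col_mx0.
  have hk2 : Fmx Q z1 z2 g *m k2 = 0.
    rewrite FmxM col_mxKu col_mxKd hx /mpdd -scalemxAl mulmxBl hx sub0r.
    rewrite -scalemxAr !scalerN scalerA.
    by rewrite addNr col_mx0.
  have k10 : k1 != 0.
    by apply: contra v0 => /eqP/(congr1 dsubmx); rewrite col_mxKd linear0 => ->.
  have [p1|p1] := eqVneq (phi k1) 0; first exact: (main k1).
  apply: (main (phi k2 *: k1 - phi k1 *: k2)).
  - apply: contra x0 => /eqP/(congr1 usubmx).
    rewrite linearB /= !linearZ /= /k1 /k2 !col_mxKu scaler0 add0r linear0 scalerN => /eqP.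
    by rewrite oppr_eq0 scaler_eq0 (negPf p1).
  - by rewrite mulmxBr -!scalemxAr hk1 hk2 !scaler0 subr0.
  - by rewrite /phi mulmxBr -!scalemxAr !mxE -/(phi k1) -/(phi k2) mulrC subrr.
move=> z z0 hQ hphi.
have hz : 0 < vnorm z.
  by rewrite lt_def vnorm_ge0 andbT; apply: contra z0 => /eqP/vnorm_eq0 ->.
have := svd_lower s0 smono hU hV hsvd hphi hi.
have -> : Fmx A z1 z2 g *m z = - (Fmx D z1 z2 g *m z).
  by apply/eqP; rewrite -addr_eq0 -mulmxDl -FmxD hQ.
rewrite vnormN => /le_trans /(_ (specnormP _ _)).
by rewrite ler_pM2r.
Qed.


Lemma sort_inj N (f : 'I_N -> R) : exists σ : 'I_N -> 'I_N,
  injective σ /\ forall i j : 'I_N, (i <= j)%N -> f (σ j) <= f (σ i).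
Proof.
pose leT := fun a b : 'I_N => f b <= f a.
pose r := sort leT (enum 'I_N).
have sr : size r = N by rewrite size_sort size_enum_ord.
have ur : uniq r by rewrite sort_uniq enum_uniq.
have tot : total leT by move=> a b; rewrite /leT le_total.
have tr : transitive leT by move=> a b c h1 h2; rewrite /leT (le_trans h2 h1).
have rf : reflexive leT by move=> a; rewrite /leT lexx.
have so : sorted leT r by apply: sort_sorted.
exists (fun i => nth i r i); split.
  move=> i j /eqP; rewrite (set_nth_default i j) ?sr ?ltn_ord // nth_uniq ?sr ?ltn_ord //.
  by move/eqP/val_inj.
move=> i j hij; rewrite (set_nth_default i j) ?sr ?ltn_ord //.
by apply: (sorted_leq_nth tr rf) => //; rewrite inE sr ltn_ord.
Qed.


Local Notation "B ^!" :=
  (orthomx conjC (mx_of_hermitian (hermitian1mx _)) B) : matrix_set_scope.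

Lemma castU m N (e : m = N) (Z : 'M[C]_(m, N)) :
  Z \is unitarymx -> castmx (e, erefl N) Z \is unitarymx.
Proof. by case: N / e in Z *; rewrite castmx_id. Qed.

Lemma cast_row m N (e : m = N) (Z : 'M[C]_(m, N)) (j : 'I_N) :
  row j (castmx (e, erefl N) Z) = row (cast_ord (esym e) j) Z.
Proof. by case: N / e in Z j *; rewrite castmx_id cast_ord_id. Qed.

Lemma complete k N (X : 'M[C]_(k, N)) : X \is unitarymx ->
  exists2 Y : 'M[C]_N, Y \is unitarymx &
    forall (i : 'I_k) (j : 'I_N), (j : nat) = i -> row j Y = row i X.
Proof.
move=> XU.
set S := schmidt (row_base (X^!)%MS).
have rk : \rank X = k by exact: mxrank_unitary.
have e : (k + \rank (X^!)%MS = N)%N by rewrite -{1}rk add_rank_ortho.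
have SX : (S <= X^!)%MS.
  by rewrite eqmx_schmidt_free ?row_base_free // eq_row_base.
have Zu : col_mx X S \is unitarymx.
  apply/unitarymxP; rewrite tr_col_mx map_row_mx mul_col_row.
  rewrite (unitarymxP XU) (unitarymxP (schmidt_unitarymx _ _)) ?rank_leq_col //.
  rewrite (orthomx1P SX) (orthomx1P _) -?scalar_mx_block //.
  by rewrite orthomx_sym.
exists (castmx (e, erefl N) (col_mx X S)); first exact: castU.
move=> i j hij; rewrite cast_row.
have -> : cast_ord (esym e) j = lshift _ i by apply: val_inj; rewrite /= hij.
by rewrite rowKu.
Qed.


Lemma sq_col p q (M : 'M[C]_(p, q)) i : (sq (col i M))%:C = (ctrmx M *m M) i i.
Proof.
rewrite /sq rmorph_sum !mxE; apply: eq_bigr => l _.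
by rewrite rmorphXn /= cabsE normCK !mxE mulrC.
Qed.

Lemma svd_exists N (A : 'M[C]_N) : exists s, svd_values A s.
Proof.
set H := ctrmx A *m A.
have HH : ctrmx H = H by rewrite /H ctrmxM ctrmxK.
have Hn : H \is normalmx by apply/normalmxP; rewrite -ctrmxE HH.
set P := spectralmx H.
have PU : P \is unitarymx := spectral_unitarymx H.
have hH := orthomx_spectralP Hn; rewrite invmx_unitary // -/P in hH.
have PP : P *m ctrmx P = 1%:M by rewrite ctrmxE; exact/unitarymxP.
set B0 := A *m ctrmx P.
have hB0 : ctrmx B0 *m B0 = diag_mx (spectral_diag H).
  rewrite /B0 ctrmxM ctrmxK mulmxA -(mulmxA P) -/H {1}hH -ctrmxE.
  by rewrite !mulmxA PP mul1mx -mulmxA PP mulmx1.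
have offd (a b : 'I_N) : a != b -> (ctrmx B0 *m B0) a b = 0.
  by move=> ab; rewrite hB0 mxE (negPf ab) mulr0n.
pose f k := sq (col k B0).
have [σ [σi σm]] := sort_inj f.
set V : 'M[C]_N := \matrix_(l, i) ctrmx P l (σ i).
set B := A *m V.
have hB l i : B l i = B0 l (σ i).
  by rewrite !mxE; apply: eq_bigr => k _; rewrite !mxE.
have BE : B = A *m V by [].
clearbody B B0.
have VU : unitary V.
  apply/matrixP => a b; rewrite !mxE.
  have := congr1 (fun M : 'M[C]_N => M (σ a) (σ b)) PP; rewrite /= !mxE ; rewrite (inj_eq σi) => <-.
  by apply: eq_bigr => l _; rewrite !mxE conjcK.
have hBB a b : (ctrmx B *m B) a b = (ctrmx B0 *m B0) (σ a) (σ b).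
  by rewrite !mxE; apply: eq_bigr => l _; rewrite /ctrmx !mxE !hB.
have hfB i : sq (col i B) = f (σ i).
  by rewrite /f /sq; apply: eq_bigr => l _; rewrite !mxE hB.
pose s i := Num.sqrt (f (σ i)).
have s0 i : 0 <= s i by exact: sqrtr_ge0.
have sm : forall i j : 'I_N, (i <= j)%N -> s j <= s i.
  by move=> i j hij; rewrite /s ler_sqrt ?sq_ge0 // σm.
have s2 i : s i ^+ 2 = f (σ i) by rewrite sqr_sqrtr ?sq_ge0.
pose ss := [seq s i | i <- enum 'I_N].
have sss : size ss = N by rewrite size_map size_enum_ord.
have nss (i : 'I_N) : nth 0 ss i = s i.
  by rewrite (nth_map i) ?size_enum_ord ?ltn_ord // nth_ord_enum.
pose k := find (fun x : R => x == 0) ss.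
have hk : (k <= N)%N by rewrite -sss find_size.
have hpos (i : 'I_N) : (i < k)%N -> 0 < s i.
  move=> ik; have := before_find 0 ik; rewrite nss => h.
  by rewrite lt_def h s0.
have hzero (i : 'I_N) : (k <= i)%N -> s i = 0.
  move=> ki; have kN : (k < N)%N by apply: leq_ltn_trans ki _.
  have := nth_find 0 (_ : has (fun x : R => x == 0) ss).
  rewrite has_find sss => /(_ kN).
  rewrite -/k -[k]/(nat_of_ord (Ordinal kN)) nss => /eqP sk0.
  by apply/eqP; rewrite eq_le s0 andbT -sk0; apply: sm.
pose X : 'M[C]_(k, N) := \matrix_(a, l)
  ((B l (widen_ord hk a))^*%C * ((s (widen_ord hk a))^-1)%:C).
have XU : X \is unitarymx.
  apply/unitarymxP/matrixP => a b; rewrite -ctrmxE.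
  set a' := widen_ord hk a; set b' := widen_ord hk b.
  have -> : (X *m ctrmx X) a b =
      (ctrmx B *m B) a' b' * (((s a')^-1)%:C * ((s b')^-1)%:C).
    rewrite !mxE mulr_suml; apply: eq_bigr => l _; rewrite /ctrmx !mxE.
    rewrite rmorphM /= conjcK -/a' -/b'.
    have -> : forall x : R, (x +i* - 0)%C = x%:C by move=> x; rewrite oppr0.
    ring.
  rewrite hBB [1%:M a b]mxE /a' /b'; clear a' b'.
  have [<-|ab] := eqVneq a b.
    rewrite (_ : true%:R = 1) // -sq_col -/(f (σ (widen_ord hk a))) -s2.
    have sa : s (widen_ord hk a) != 0 by rewrite gt_eqF // (@hpos (widen_ord hk a) (ltn_ord a)).
    rewrite -!rmorphM /= -(@rmorph1 _ _ (real_complex R)).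
    by congr (_ %:C); field.
  rewrite offd ?mul0r ?(negPf ab) //.
  rewrite (inj_eq σi); apply: contra ab => /eqP /(congr1 val) /= h.
  by apply/eqP/val_inj.
have [Y YU hY] := complete XU.
have UU : unitary (ctrmx Y).
  by rewrite /unitary ctrmxK ctrmxE; exact/unitarymxP.
have hBU : B = ctrmx Y *m diag_mx (\row_i (s i)%:C).
  apply/matrixP => l i; rewrite mul_mx_diag !mxE.
  have [ik|ki] := ltnP i k.
    have := congr1 (fun M : 'M[C]_(1, N) => M 0 l) (hY (Ordinal ik) i erefl).
    rewrite /= !mxE => ->.
    have -> : widen_ord hk (Ordinal ik) = i by apply: val_inj.
    rewrite rmorphM /= conjcK.
    have -> : forall x : R, (x +i* - 0)%C = x%:C by move=> x; rewrite oppr0.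
    rewrite -mulrA -rmorphM /= mulVf ?mulr1 //.
    by rewrite gt_eqF // (@hpos i ik).
  rewrite hzero // mulr0.
  have : col i B = 0 by apply: sq_eq0; rewrite hfB -s2 hzero // expr0n.
  by move/matrixP/(_ l 0); rewrite !mxE.
exists s; split; first exact: s0.
split; first exact: sm.
exists (ctrmx Y), V; split; first exact: UU.
split; first exact: VU.
rewrite -hBU BE -mulmxA.
by have /mulmx1C -> := VU; rewrite mulmx1.
Qed.

End Basics.

Theorem lemma6 (R : realType) (n m : nat)
  (A Delta : 'I_m.+1 -> 'M[R[i]]_n) (w : 'I_m.+1 -> R) (eps : R)
  (mu1 mu2 : R[i]) (gamma : R) :
  mu1 != mu2 -> 0 < eps ->
  (forall j, 0 <= w j) -> 0 < w ord0 ->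
  (forall j, specnorm (Delta j) <= eps * w j) ->
  mp_eigenvalue (fun j => A j + Delta j) mu1 ->
  mp_eigenvalue (fun j => A j + Delta j) mu2 ->
  gamma != 0 ->
  eps >= specnorm (Fmx Delta mu1 mu2 gamma) / specnorm (Wmx w mu1 mu2 gamma) /\
  specnorm (Fmx Delta mu1 mu2 gamma) / specnorm (Wmx w mu1 mu2 gamma)
    >= singval (Fmx A mu1 mu2 gamma) (2 * n).-1 / specnorm (Wmx w mu1 mu2 gamma).
Proof.
move=> h12 e0 w0 _ HD e1 e2 g0.
have P1 : specnorm (Fmx Delta mu1 mu2 gamma) <= eps * specnorm (Wmx w mu1 mu2 gamma).
  by apply: part1 => //; exact: ltW.
have W0 := specnorm_ge0 (Wmx w mu1 mu2 gamma).
split.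
  have [->|Wp] := eqVneq (specnorm (Wmx w mu1 mu2 gamma)) 0.
    by rewrite invr0 mulr0 ltW.
  have Wpos : 0 < specnorm (Wmx w mu1 mu2 gamma) by rewrite lt_def Wp W0.
  by rewrite ler_pdivrMr.
apply: ler_wpM2r; first by rewrite invr_ge0.
case: n A Delta HD e1 e2 P1 => [|n] A Delta HD e1 e2 P1.
  by rewrite /singval nth_default ?specnorm_ge0 // size_map size_enum_ord.
set F := Fmx A mu1 mu2 gamma.
have hs := svd_exists F.
have := epsilon_spec (inhabits (fun _ => 0)) (svd_values F) hs.
rewrite -/(singular_values F).
move=> [s0 [sm [U [V [hU [hV hF]]]]]].
have hi0 : ((2 * n.+1).-1.-1 < n.+1 + n.+1)%N by lia.
have hi1 : ((2 * n.+1).-1 < n.+1 + n.+1)%N by lia.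
pose i0 : 'I_(n.+1 + n.+1) := Ordinal hi0.
pose i1 : 'I_(n.+1 + n.+1) := Ordinal hi1.
have -> : singval F (2 * n.+1).-1 = singular_values F i0.
  by rewrite /singval (nth_map i0) ?size_enum_ord // -[X in nth _ _ X]/(nat_of_ord i0) nth_ord_enum.
apply: (part2_core (i1 := i1) h12 e1 e2 s0 sm hU hV hF).
have E0 : nat_of_ord i0 = (n + n)%N by change ((2 * n.+1).-1.-1 = (n + n)%N); rewrite -!subn1; lia.
have E1 : nat_of_ord i1 = (n + n).+1 by change ((2 * n.+1).-1 = (n + n).+1); rewrite -!subn1; lia.
move=> i hne; have hne' : nat_of_ord i != nat_of_ord i1 by rewrite val_eqE.
rewrite E1 in hne'; rewrite E0.
have := ltn_ord i; move: hne'; lia.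
Qed.
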